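(* Consider $\Gamma_T(p,q)$ and its dual games. Let $x^*$ be the realization plan of a security strategy of player 1 in $\Gamma_T(p,q)$ and $\nu^{*l}=-u_{l,0}(x^* )$ for $l\in L$. Then player 1's security strategy $\tilde\sigma^*$ in the type-2 dual game $\tilde\Gamma^2_T(p,\nu^* )$, which at stage $t$ depends only on $(t,p_t,\nu_t)$, is also a security strategy of player 1 in $\Gamma_T(p,q)$. Similarly, let $y^*$ be the realization plan of a security strategy of player 2 in $\Gamma_T(p,q)$ and $\mu^{*k}=-w_{k,0}(y^* )$ for $k\in K$; then player 2's security strategy $\tilde\tau^*$ in $\tilde\Gamma^1_T(\mu^*,q)$, which at stage $t$ depends only on $(t,\mu_t,q_t)$, is also a security strategy of player 2 in $\Gamma_T(p,q)$.
   Context: Setting: nonempty finite type sets $K,L$, action sets $A,B$, payoff $M:K\times L\times A\times B\to\mathbb R$ ($M^{kl}_{a,b}=M(k,l,a,b)$), $p\in\Delta(K),q\in\Delta(L)$ with positive entries. In $\Gamma_T(p,q)$, $k\sim p$, $l\sim q$ drawn independently, told privately to players 1, 2; $T$ stages of simultaneous, publicly announced actions; behavior strategies depend on own type and both histories; payoff $\mathbb E[\sum_{t=1}^TM(k,l,a_t,b_t)]$ to player 1 (maximizer); security strategies attain $\max_\sigma\min_\tau$ resp. $\min_\tau\max_\sigma$ of the payoff. Realization plan of $\sigma$: $x^{a_t}_{k,h_t^A,h_t^B}=p^k\prod_{s=1}^t\sigma_s^{a_s}(k,h_s^A,h_s^B)$; $u_{l,0}(x)=\min_{\tau(l)}\sum_kp^k\mathbb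 E_{\sigma,\tau(l)}[\sum_{s=1}^TM\mid k,l]$; for a realization plan $y$ of $\tau$, $w_{k,0}(y)=\max_{\sigma(k)}\sum_lq^l\mathbb E_{\sigma(k),\tau}[\sum_{s=1}^TM\mid k,l]$. Dual games: $\tilde\Gamma^1_T(\mu,q)$: player 1 chooses $k$ himself, $l\sim q$ by nature, payoff $\mathbb E[\mu^k+\sum_{t=1}^TM]$; $\tilde\Gamma^2_T(p,\nu)$: $k\sim p$ by nature, player 2 chooses $l$ himself, payoff $\mathbb E[\nu^l+\sum_{t=1}^TM]$. Statistics: in $\tilde\Gamma^2_T(p,\nu)$, with $r_t^k=\sigma_t(k,h_t^A,h_t^B)$, $p_1=p$, $\nu_1=\nu$, $p^k_{t+1}=p_t^kr_t^k(a_t)/\sum_{k'}p_t^{k'}r_t^{k'}(a_t)$, $\nu^l_{t+1}=\nu^l_t+\sum_kp^k_{t+1}M^{kl}_{a_t,b_t}$; in $\tilde\Gamma^1_T(\mu,q)$, with $z_t^l=\tau_t(l,h_t^A,h_t^B)$, $q_1=q$, $\mu_1=\mu$, $q^l_{t+1}=q^l_tz^l_t(b_t)/\sum_{l'}q_t^{l'}z_t^{l'}(b_t)$, $\mu^k_{t+1}=\mu^k_t+\sum_lq^l_{t+1}M^{kl}_{a_t,b_t}$. *)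

(* Defs.v *)
From HB Require Import structures.
From mathcomp Require Import all_boot all_order all_algebra.
From mathcomp Require Import classical_sets reals.

Set Implicit Arguments.
Unset Strict Implicit.
Unset Printing Implicit Defensive.

Import Order.TTheory GRing.Theory Num.Theory.
Local Open Scope ring_scope.

(* Repeated game with incomplete information on both sides, Gamma_T(p,q),
   and its dual games.
   - Types k : K (player 1), l : L (player 2); actions a : A, b : B.
   - A history at stage t (1-based) is the pair (h^A_t, h^B_t) of the past
     action sequences, of length t-1, in chronological order.
   - A single-type behaviour strategy of player 1 is a map
     h^A -> h^B -> (A -> R) (a mixed action); a behaviour strategy of player 1
     is such a map for every type k. *)

Section Games.
Variable R : realType.
Variables K L A B : finType.
Variable M : K -> L -> A -> B -> R.

Definition mixed (X : finType) (f : X -> R) :=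
  (forall x, 0 <= f x) /\ \sum_x f x = 1.

Definition valid_s1 (s : seq A -> seq B -> A -> R) :=
  forall ha hb, mixed (s ha hb).
Definition valid_s2 (z : seq A -> seq B -> B -> R) :=
  forall ha hb, mixed (z ha hb).

Definition valid1 (sigma : K -> seq A -> seq B -> A -> R) :=
  forall k, valid_s1 (sigma k).
Definition valid2 (tau : L -> seq A -> seq B -> B -> R) :=
  forall l, valid_s2 (tau l).

(* expected value of the sum of the stage payoffs m over the [n] remaining
   stages, from history (ha, hb), when player 1 plays s and player 2 plays z
   (simultaneous independent moves, publicly announced). *)
Fixpoint pay (n : nat) (s : seq A -> seq B -> A -> R)
    (z : seq A -> seq B -> B -> R) (m : A -> B -> R)
    (ha : seq A) (hb : seq B) : R :=
  match n with
  | 0 => 0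
  | n'.+1 => \sum_a \sum_b s ha hb a * z ha hb b *
               (m a b + pay n' s z m (rcons ha a) (rcons hb b))
  end.

Definition cond_pay (T : nat) sigma tau (k : K) (l : L) : R :=
  pay T (sigma k) (tau l) (M k l) [::] [::].

Definition payoff (T : nat) (p : K -> R) (q : L -> R) sigma tau : R :=
  \sum_k \sum_l p k * q l * cond_pay T sigma tau k l.

(* security strategies of Gamma_T(p,q): sigma attains
   max_sigma inf_tau payoff, i.e. every level guaranteed by some strategy is
   guaranteed by sigma; dually for player 2. *)
Definition security1 (T : nat) (p : K -> R) (q : L -> R) sigma :=
  valid1 sigma /\
  forall sigma' v, valid1 sigma' ->
    (forall tau, valid2 tau -> v <= payoff T p q sigma' tau) ->
    (forall tau, valid2 tau -> v <= payoff T p q sigma tau).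

Definition security2 (T : nat) (p : K -> R) (q : L -> R) tau :=
  valid2 tau /\
  forall tau' v, valid2 tau' ->
    (forall sigma, valid1 sigma -> payoff T p q sigma tau' <= v) ->
    (forall sigma, valid1 sigma -> payoff T p q sigma tau <= v).

(* u_{l,0}(x) = min_{tau(l)} sum_k p^k E_{sigma,tau(l)}[sum_t M | k,l],
   where x is the realization plan of sigma *)
Definition u0 (T : nat) (p : K -> R) sigma (l : L) : R :=
  inf [set v | exists tau, valid2 tau /\ v = \sum_k p k * cond_pay T sigma tau k l].

(* w_{k,0}(y) = max_{sigma(k)} sum_l q^l E_{sigma(k),tau}[sum_t M | k,l],
   where y is the realization plan of tau *)
Definition w0 (T : nat) (q : L -> R) tau (k : K) : R :=
  sup [set v | exists sigma, valid1 sigma /\ v = \sum_l q l * cond_pay T sigma tau k l].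

(* Dual game ~Gamma^2_T(p,nu): k ~ p by nature, player 2 chooses l himself
   (possibly at random, with distribution pi), payoff E[nu^l + sum_t M]. *)
Definition dual2_payoff (T : nat) (p : K -> R) (nu : L -> R) sigma
    (pi : L -> R) tau : R :=
  \sum_l pi l * (nu l + \sum_k p k * cond_pay T sigma tau k l).

Definition dual2_security1 (T : nat) (p : K -> R) (nu : L -> R) sigma :=
  valid1 sigma /\
  forall sigma' v, valid1 sigma' ->
    (forall pi tau, mixed pi -> valid2 tau -> v <= dual2_payoff T p nu sigma' pi tau) ->
    (forall pi tau, mixed pi -> valid2 tau -> v <= dual2_payoff T p nu sigma pi tau).

(* Dual game ~Gamma^1_T(mu,q): player 1 chooses k himself (distribution pi),
   l ~ q by nature, payoff E[mu^k + sum_t M]. *)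
Definition dual1_payoff (T : nat) (mu : K -> R) (q : L -> R) (pi : K -> R)
    sigma tau : R :=
  \sum_k pi k * (mu k + \sum_l q l * cond_pay T sigma tau k l).

Definition dual1_security2 (T : nat) (mu : K -> R) (q : L -> R) tau :=
  valid2 tau /\
  forall tau' v, valid2 tau' ->
    (forall pi sigma, mixed pi -> valid1 sigma -> dual1_payoff T mu q pi sigma tau' <= v) ->
    (forall pi sigma, mixed pi -> valid1 sigma -> dual1_payoff T mu q pi sigma tau <= v).

(* Statistics (p_t, nu_t) of ~Gamma^2_T(p,nu) along a history, processed in
   chronological order; [pre_a, pre_b] is the already processed prefix.
   Returns None when the history has probability 0 (Bayes' rule undefined). *)
Fixpoint stats1_aux (sigma : K -> seq A -> seq B -> A -> R)
    (pre_a : seq A) (pre_b : seq B) (pt : K -> R) (nt : L -> R)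
    (h : seq (A * B)) : option ((K -> R) * (L -> R)) :=
  match h with
  | [::] => Some (pt, nt)
  | (a, b) :: h' =>
      let den := \sum_k pt k * sigma k pre_a pre_b a in
      if 0 < den then
        let p' := fun k => pt k * sigma k pre_a pre_b a / den in
        stats1_aux sigma (rcons pre_a a) (rcons pre_b b) p'
          (fun l => nt l + \sum_k p' k * M k l a b) h'
      else None
  end.

Definition stats1 sigma (p : K -> R) (nu : L -> R) (ha : seq A) (hb : seq B) :=
  stats1_aux sigma [::] [::] p nu (zip ha hb).

Fixpoint stats2_aux (tau : L -> seq A -> seq B -> B -> R)
    (pre_a : seq A) (pre_b : seq B) (mt : K -> R) (qt : L -> R)
    (h : seq (A * B)) : option ((K -> R) * (L -> R)) :=
  match h with
  | [::] => Some (mt, qt)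
  | (a, b) :: h' =>
      let den := \sum_l qt l * tau l pre_a pre_b b in
      if 0 < den then
        let q' := fun l => qt l * tau l pre_a pre_b b / den in
        stats2_aux tau (rcons pre_a a) (rcons pre_b b)
          (fun k => mt k + \sum_l q' l * M k l a b) q' h'
      else None
  end.

Definition stats2 tau (mu : K -> R) (q : L -> R) (ha : seq A) (hb : seq B) :=
  stats2_aux tau [::] [::] mu q (zip ha hb).

(* sigma, at every stage t <= T (history length t-1 < T) reached with
   positive probability, depends only on (t, p_t, nu_t) (and own type k). *)
Definition stationary1 (T : nat) (p : K -> R) (nu : L -> R) sigma :=
  exists F : nat -> (K -> R) -> (L -> R) -> K -> A -> R,
    forall ha hb pt nt, size ha = size hb -> (size ha < T)%N ->
      stats1 sigma p nu ha hb = Some (pt, nt) ->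
      forall k a, sigma k ha hb a = F (size ha) pt nt k a.

Definition stationary2 (T : nat) (mu : K -> R) (q : L -> R) tau :=
  exists G : nat -> (K -> R) -> (L -> R) -> L -> B -> R,
    forall ha hb mt qt, size ha = size hb -> (size ha < T)%N ->
      stats2 tau mu q ha hb = Some (mt, qt) ->
      forall l b, tau l ha hb b = G (size ha) mt qt l b.

End Games.

(* Main.v *)
Require Import Defs.
From HB Require Import structures.
From mathcomp Require Import all_boot all_order all_algebra.
From mathcomp Require Import boolp classical_sets reals.
From mathcomp Require Import lra.
Import Order.TTheory GRing.Theory Num.Theory.
Local Open Scope ring_scope.

Section Aux.
Variable R : realType.

Lemma conv_bound (A B : finType) (w x : A -> B -> R) (D : R) :
  (forall a b, 0 <= w a b) -> \sum_a \sum_b w a b = 1 ->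
  (forall a b, `|x a b| <= D) -> `|\sum_a \sum_b w a b * x a b| <= D.
Proof.
move=> w0 w1 xD.
apply: (le_trans (ler_norm_sum _ _ _)).
apply: (@le_trans _ _ (\sum_a \sum_b w a b * D)).
  apply: ler_sum => a _; apply: (le_trans (ler_norm_sum _ _ _)).
  apply: ler_sum => b _; rewrite normrM ger0_norm //; exact: ler_wpM2l.
under eq_bigr do rewrite -mulr_suml.
by rewrite -mulr_suml w1 mul1r.
Qed.

Lemma single_le (A B : finType) (m : A -> B -> R) a b :
  `|m a b| <= \sum_a \sum_b `|m a b|.
Proof.
rewrite (bigD1 a) //= (bigD1 b) //=.
have h1 : 0 <= \sum_(b' | b' != b) `|m a b'| by apply: sumr_ge0.
have h2 : 0 <= \sum_(a' | a' != a) \sum_b `|m a' b| by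
  apply: sumr_ge0 => ? _; apply: sumr_ge0.
lra.
Qed.

Lemma pay_bound (A B : finType) n s z (m : A -> B -> R) ha hb :
  valid_s1 s -> valid_s2 z ->
  `|pay n s z m ha hb| <= n%:R * (\sum_a \sum_b `|m a b|).
Proof.
move=> vs vz; elim: n ha hb => [|n IH] ha hb /=.
  by rewrite normr0 mul0r.
apply: conv_bound.
- move=> a b; apply: mulr_ge0; [exact: (vs ha hb).1 | exact: (vz ha hb).1].
- under eq_bigr do rewrite -mulr_sumr (vz ha hb).2 mulr1.
  exact: (vs ha hb).2.
- move=> a b; apply: (le_trans (ler_normD _ _)).
  have := @single_le A B m a b; have := IH (rcons ha a) (rcons hb b).
  rewrite -addn1 natrD mulrDl mul1r; lra.
Qed.

Variables (K L A B : finType) (M : K -> L -> A -> B -> R).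

Lemma valid2_ex : (0 < #|B|)%N -> exists tau : L -> seq A -> seq B -> B -> R, valid2 tau.
Proof.
move=> hB; exists (fun _ _ _ _ => #|B|%:R^-1) => l ha hb; split.
  by move=> _; rewrite invr_ge0 ler0n.
rewrite sumr_const -(mulr_natr (#|B|%:R^-1)) mulVf // pnatr_eq0 -lt0n //.
Qed.

Lemma valid1_ex : (0 < #|A|)%N -> exists sigma : K -> seq A -> seq B -> A -> R, valid1 sigma.
Proof.
move=> hA; exists (fun _ _ _ _ => #|A|%:R^-1) => k ha hb; split.
  by move=> _; rewrite invr_ge0 ler0n.
rewrite sumr_const -(mulr_natr (#|A|%:R^-1)) mulVf // pnatr_eq0 -lt0n //.
Qed.

Lemma payoffE T p q sigma tau :
  payoff M T p q sigma tau = \sum_l q l * \sum_k p k * cond_pay M T sigma tau k l.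
Proof.
rewrite /payoff exchange_big; apply: eq_bigr => l _; rewrite mulr_sumr.
by apply: eq_bigr => k _; rewrite mulrA (mulrC (q l)).
Qed.

Lemma payoffE2 T p q sigma tau :
  payoff M T p q sigma tau = \sum_k p k * \sum_l q l * cond_pay M T sigma tau k l.
Proof.
rewrite /payoff; apply: eq_bigr => k _; rewrite mulr_sumr.
by apply: eq_bigr => l _; rewrite mulrA.
Qed.

Definition D1 T (p : K -> R) l := \sum_k `|p k| * (T%:R * \sum_a \sum_b `|M k l a b|).
Definition D2 T (q : L -> R) k := \sum_l `|q l| * (T%:R * \sum_a \sum_b `|M k l a b|).

Lemma S1_bound T p sigma tau l : valid1 sigma -> valid2 tau ->
  `|\sum_k p k * cond_pay M T sigma tau k l| <= D1 T p l.
Proof.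
move=> vs vt; apply: (le_trans (ler_norm_sum _ _ _)); apply: ler_sum => k _.
rewrite normrM; apply: ler_wpM2l => //; exact: pay_bound.
Qed.

Lemma S2_bound T q sigma tau k : valid1 sigma -> valid2 tau ->
  `|\sum_l q l * cond_pay M T sigma tau k l| <= D2 T q k.
Proof.
move=> vs vt; apply: (le_trans (ler_norm_sum _ _ _)); apply: ler_sum => l _.
rewrite normrM; apply: ler_wpM2l => //; exact: pay_bound.
Qed.

Lemma has_inf_u0 T p sigma l : (0 < #|B|)%N -> valid1 sigma ->
  has_inf [set v | exists tau, valid2 tau /\ v = \sum_k p k * cond_pay M T sigma tau k l].
Proof.
move=> hB vs; split.
  have [tau vt] := valid2_ex hB.
  by exists (\sum_k p k * cond_pay M T sigma tau k l); exists tau.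
exists (- D1 T p l) => v [tau [vt ->]].
have := S1_bound T p sigma tau l vs vt; rewrite ler_norml => /andP[] //.
Qed.

Lemma has_sup_w0 T q tau k : (0 < #|A|)%N -> valid2 tau ->
  has_sup [set v | exists sigma, valid1 sigma /\ v = \sum_l q l * cond_pay M T sigma tau k l].
Proof.
move=> hA vt; split.
  have [sigma vs] := valid1_ex hA.
  by exists (\sum_l q l * cond_pay M T sigma tau k l); exists sigma.
exists (D2 T q k) => v [sigma [vs ->]].
have := S2_bound T q sigma tau k vs vt; rewrite ler_norml => /andP[] //.
Qed.

Lemma u0_le T p sigma tau l : (0 < #|B|)%N -> valid1 sigma -> valid2 tau ->
  u0 M T p sigma l <= \sum_k p k * cond_pay M T sigma tau k l.
Proof.
move=> hB vs vt; have [_ hl] := has_inf_u0 T p sigma l hB vs.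
by apply: (ge_inf hl); exists tau.
Qed.

Lemma w0_ge T q sigma tau k : (0 < #|A|)%N -> valid1 sigma -> valid2 tau ->
  \sum_l q l * cond_pay M T sigma tau k l <= w0 M T q tau k.
Proof.
move=> hA vs vt; have [_ hl] := has_sup_w0 T q tau k hA vt.
by apply: (ub_le_sup hl); exists sigma.
Qed.

Lemma delta_mixed (X : finType) (x : X) : mixed (fun y : X => ((y == x)%:R : R)).
Proof.
split; first by move=> y; rewrite ler0n.
rewrite (bigD1 x) //= eqxx big1 ?addr0 // => y /negbTE ->; done.
Qed.

Lemma delta_sum (X : finType) (x : X) (f : X -> R) :
  \sum_y (y == x)%:R * f y = f x.
Proof.
rewrite (bigD1 x) //= eqxx mul1r big1 ?addr0 // => y /negbTE ->; by rewrite mul0r.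
Qed.

End Aux.

Theorem corollary1 (R : realType) (K L A B : finType)
    (M : K -> L -> A -> B -> R) (T : nat) (p : K -> R) (q : L -> R) :
  (0 < #|A|)%N -> (0 < #|B|)%N ->
  (forall k, 0 < p k) -> \sum_k p k = 1 ->
  (forall l, 0 < q l) -> \sum_l q l = 1 ->
  (forall sigma_star, security1 M T p q sigma_star ->
     let nu_star := fun l => - u0 M T p sigma_star l in
     forall sigma_tilde,
       dual2_security1 M T p nu_star sigma_tilde ->
       stationary1 M T p nu_star sigma_tilde ->
       security1 M T p q sigma_tilde)
  /\
  (forall tau_star, security2 M T p q tau_star ->
     let mu_star := fun k => - w0 M T q tau_star k in
     forall tau_tilde,
       dual1_security2 M T mu_star q tau_tilde ->
       stationary2 M T mu_star q tau_tilde ->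
       security2 M T p q tau_tilde).
Proof.
move=> hA hB p0 p1 q0 q1; split.
- move=> ss [vss sec] nu st [vst dsec] _; split => // s' v vs' Hv tau vt.
  have Hs := sec s' v vs' Hv.
  have H0 : forall pi tau, mixed pi -> valid2 tau -> 0 <= dual2_payoff M T p nu st pi tau.
    apply: (dsec ss 0 vss) => pi t' [pi0 _] vt'.
    rewrite /dual2_payoff; apply: sumr_ge0 => l _; apply: mulr_ge0 => //.
    rewrite /nu addrC subr_ge0; exact: u0_le.
  have Hl : forall l, u0 M T p ss l <= \sum_k p k * cond_pay M T st tau k l.
    move=> l; have := H0 _ tau (@delta_mixed R _ l) vt.
    by rewrite /dual2_payoff delta_sum /nu addrC subr_ge0.
  apply: (@le_trans _ _ (\sum_l q l * u0 M T p ss l)); last first.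
    rewrite payoffE; apply: ler_sum => l _; apply: ler_wpM2l => //.
    exact: ltW.
  apply/ler_addgt0Pr => e e0.
  have: forall l, exists t : L -> seq A -> seq B -> B -> R, valid2 t /\
      \sum_k p k * cond_pay M T ss t k l < u0 M T p ss l + e.
    move=> l; have [x [t [vt' ->]] lt] := inf_adherent e0 (@has_inf_u0 R K L A B M T p ss l hB vss).
    by exists t.
  move=> /choice [f Hf].
  have vf : valid2 (fun l => f l l) by move=> l; exact: (Hf l).1.
  apply: (le_trans (Hs _ vf)); rewrite payoffE.
  have -> : \sum_l q l * u0 M T p ss l + e = \sum_l q l * (u0 M T p ss l + e).
    by rewrite [RHS](eq_bigr _ (fun l _ => mulrDr _ _ _)) big_split /= -mulr_suml q1 mul1r.
  apply: ler_sum => l _; apply: ler_wpM2l; first exact: ltW.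
  exact: ltW (Hf l).2.
- move=> ts [vts sec] mu tt [vtt dsec] _; split => // t' v vt' Hv s vs.
  have Hs := sec t' v vt' Hv.
  have H0 : forall pi s, mixed pi -> valid1 s -> dual1_payoff M T mu q pi s tt <= 0.
    apply: (dsec ts 0 vts) => pi s' [pi0 _] vs'.
    rewrite /dual1_payoff; rewrite -oppr_ge0 -sumrN; apply: sumr_ge0 => k _.
    rewrite -mulrN; apply: mulr_ge0 => //.
    rewrite /mu oppr_ge0 addrC subr_le0; exact: w0_ge.
  have Hk : forall k, \sum_l q l * cond_pay M T s tt k l <= w0 M T q ts k.
    move=> k; have := H0 _ s (@delta_mixed R _ k) vs.
    by rewrite /dual1_payoff delta_sum /mu addrC subr_le0.
  apply: (@le_trans _ _ (\sum_k p k * w0 M T q ts k)).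
    rewrite payoffE2; apply: ler_sum => k _; apply: ler_wpM2l => //.
    exact: ltW.
  apply/ler_addgt0Pr => e e0.
  have: forall k, exists s : K -> seq A -> seq B -> A -> R, valid1 s /\
      w0 M T q ts k - e < \sum_l q l * cond_pay M T s ts k l.
    move=> k; have [x [s' [vs' ->]] lt] := sup_adherent e0 (@has_sup_w0 R K L A B M T q ts k hA vts).
    by exists s'.
  move=> /choice [f Hf].
  have vf : valid1 (fun k => f k k) by move=> k; exact: (Hf k).1.
  rewrite -lerBlDr; apply: (le_trans _ (Hs _ vf)); rewrite payoffE2.
  have -> : \sum_k p k * w0 M T q ts k - e = \sum_k p k * (w0 M T q ts k - e).
    by rewrite [RHS](eq_bigr _ (fun k _ => mulrBr _ _ _)) big_split /= sumrN -mulr_suml p1 mul1r.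
  apply: ler_sum => k _; apply: ler_wpM2l; first exact: ltW.
  exact: ltW (Hf k).2.
Qed.
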